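(* There is a computable Friedberg enumeration $(\mathcal{G}_n)_{n\in\omega}$ of $FUG$ such that whenever $\mathcal{G}\cong\mathcal{G}_m$ and $\mathcal{G}'\cong\mathcal{G}_n$, where $\mathcal{G}'$ is a proper extension of $\mathcal{G}$ (i.e. $\mathcal{G}\subsetneq\mathcal{G}'$ as substructures), we have $m<n$.
   Context: $FUG$ is the class of finite undirected graphs (language $\{E\}$, $E$ irreflexive and symmetric) with universe a subset of $\omega$, closed under isomorphism. $D(\mathcal{A})$ is the atomic diagram of $\mathcal{A}$ (atomic sentences and their negations true in $\mathcal{A}$, elements used as constants, identified with Gödel numbers). A computable enumeration of a class $K$ is a c.e. set $\mathcal{E}$ of pairs $(n,\varphi)$, $n\in\omega$, $\varphi$ an atomic sentence or negation of one, such that (a) for each $n$, $\{\varphi:(n,\varphi)\in\mathcal{E}\}=D(\mathcal{A}_n)$ for some $\mathcal{A}_n\in K$, and (b) every $\mathcal{A}\in K$ is isomorphic to some $\mathcal{A}_n$; it is written $(\mathcal{A}_n)_{n\in\omega}$. It is Friedberg if each isomorphism type in $K$ is represented by exactly one $n$. *)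

(* Defs.v *)
From Stdlib Require Import Arith List Cantor.
Import ListNotations.

Definition pair (a b : nat) : nat := Cantor.to_nat (a, b).
Definition unpair (n : nat) : nat * nat := Cantor.of_nat n.

Inductive prf : Type :=
| PZero : prf
| PSucc : prf
| PFst  : prf
| PSnd  : prf
| PPair : prf -> prf -> prf
| PComp : prf -> prf -> prf
| PRec  : prf -> prf -> prf
| PMu   : prf -> prf.

Inductive evalR : prf -> nat -> nat -> Prop :=
| eZero x : evalR PZero x 0
| eSucc x : evalR PSucc x (S x)
| eFst x : evalR PFst x (fst (unpair x))
| eSnd x : evalR PSnd x (snd (unpair x))
| ePair f g x a b : evalR f x a -> evalR g x b -> evalR (PPair f g) x (pair a b)
| eComp f g x z y : evalR g x z -> evalR f z y -> evalR (PComp f g) x y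
| eRec0 g h a y : evalR g a y -> evalR (PRec g h) (pair a 0) y
| eRecS g h a n z y :
    evalR (PRec g h) (pair a n) z -> evalR h (pair a (pair n z)) y ->
    evalR (PRec g h) (pair a (S n)) y
| eMu f x n :
    evalR f (pair x n) 0 ->
    (forall k, k < n -> exists v, v <> 0 /\ evalR f (pair x k) v) ->
    evalR (PMu f) x n.

Definition ce (W : nat -> Prop) : Prop :=
  exists f : prf, forall x, W x <-> exists y, evalR f x y.

Record graph : Type := mkGraph { verts : list nat ; edge : nat -> nat -> bool }.

Definition in_graph (G : graph) (a : nat) : Prop := In a (verts G).

Definition is_fug (G : graph) : Prop :=
  verts G <> [] /\
  (forall a, in_graph G a -> edge G a a = false) /\
  (forall a b, in_graph G a -> in_graph G b -> edge G a b = edge G b a).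

(* Isomorphism of graphs (only the universe and E restricted to it matter). *)
Definition graph_iso (G H : graph) : Prop :=
  exists f : nat -> nat,
    (forall a, in_graph G a -> in_graph H (f a)) /\
    (forall a b, in_graph G a -> in_graph G b -> f a = f b -> a = b) /\
    (forall c, in_graph H c -> exists a, in_graph G a /\ f a = c) /\
    (forall a b, in_graph G a -> in_graph G b -> edge H (f a) (f b) = edge G a b).

(* G is a substructure of G' (relational language: induced subgraph). *)
Definition substructure (G G' : graph) : Prop :=
  (forall a, in_graph G a -> in_graph G' a) /\
  (forall a b, in_graph G a -> in_graph G b -> edge G a b = edge G' a b).

Definition proper_ext (G G' : graph) : Prop :=
  substructure G G' /\ exists a, in_graph G' a /\ ~ in_graph G a.

Inductive atom : Type :=
| AEq : nat -> nat -> atom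
| AE  : nat -> nat -> atom.

Inductive literal : Type :=
| LPos : atom -> literal
| LNeg : atom -> literal.

Definition code_atom (t : atom) : nat :=
  match t with AEq a b => pair 0 (pair a b) | AE a b => pair 1 (pair a b) end.
Definition code_lit (l : literal) : nat :=
  match l with LPos t => pair 0 (code_atom t) | LNeg t => pair 1 (code_atom t) end.

(* Truth of an atomic sentence (constants = elements of the universe). *)
Definition holds_atom (G : graph) (t : atom) : Prop :=
  match t with AEq a b => a = b | AE a b => edge G a b = true end.

Definition in_diagram (G : graph) (l : literal) : Prop :=
  match l with
  | LPos t => (match t with AEq a b | AE a b => in_graph G a /\ in_graph G b end)
              /\ holds_atom G t
  | LNeg t => (match t with AEq a b | AE a b => in_graph G a /\ in_graph G b end)
              /\ ~ holds_atom G t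
  end.

Definition comp_enum_FUG (W : nat -> Prop) (Gs : nat -> graph) : Prop :=
  ce W /\
  (forall x, W x -> exists n l, x = pair n (code_lit l)) /\
  (forall n, is_fug (Gs n) /\
             forall l, W (pair n (code_lit l)) <-> in_diagram (Gs n) l) /\
  (forall G, is_fug G -> exists n, graph_iso G (Gs n)).

Definition friedberg (Gs : nat -> graph) : Prop :=
  forall m n, graph_iso (Gs m) (Gs n) -> m = n.

(* Main.v *)
Require Import Defs.
From Stdlib Require Import Arith List Cantor Lia Bool.
Import ListNotations.

Definition p1 x := fst (unpair x).
Definition p2 x := snd (unpair x).
Lemma p1_pair a b : p1 (pair a b) = a.
Proof. unfold p1, unpair, pair. now rewrite cancel_of_to. Qed.
Lemma p2_pair a b : p2 (pair a b) = b.
Proof. unfold p2, unpair, pair. now rewrite cancel_of_to. Qed.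
Lemma pair_p x : pair (p1 x) (p2 x) = x.
Proof. unfold p1, p2, unpair, pair. rewrite <- surjective_pairing. apply cancel_to_of. Qed.
Lemma pair_inj a b c d : pair a b = pair c d -> a = c /\ b = d.
Proof. intro H. pose proof (f_equal p1 H). pose proof (f_equal p2 H).
  rewrite !p1_pair in *; rewrite !p2_pair in *. auto. Qed.

Fixpoint nomu (f : prf) : Prop :=
  match f with
  | PZero | PSucc | PFst | PSnd => True
  | PPair f g | PComp f g | PRec f g => nomu f /\ nomu g
  | PMu _ => False
  end.

Lemma evalR_det f x y1 : evalR f x y1 -> nomu f -> forall y2, evalR f x y2 -> y1 = y2.
Proof.
  induction 1; intros Hn y2 H2; simpl in Hn.
  - inversion H2; auto.
  - inversion H2; auto.
  - inversion H2; auto.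
  - inversion H2; auto.
  - inversion H2; subst. f_equal; [apply IHevalR1|apply IHevalR2]; tauto.
  - inversion H2; subst. assert (z = z0) by (apply IHevalR1; tauto). subst.
    apply IHevalR2; tauto.
  - remember (pair a 0) as q eqn:Eq in H2. inversion H2; subst;
    match goal with H : pair _ _ = pair _ _ |- _ => apply pair_inj in H as [? E] end;
    subst; [apply IHevalR; tauto | discriminate].
  - remember (pair a (S n)) as q eqn:Eq in H2. inversion H2; subst;
    match goal with H : pair _ _ = pair _ _ |- _ => apply pair_inj in H as [? E] end;
    subst; [discriminate|]. injection E as ->.
    match goal with H : evalR (PRec g h) _ ?z0 |- _ =>
      assert (z = z0) by (apply IHevalR1; [simpl; tauto|exact H]) end. subst. apply IHevalR2; tauto.
  - destruct Hn.
Qed.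

Definition PR (F : nat -> nat) := exists f, nomu f /\ forall x, evalR f x (F x).
Definition PRb (F : nat -> bool) := PR (fun x => Nat.b2n (F x)).

Lemma PR_ext F G : PR F -> (forall x, F x = G x) -> PR G.
Proof. intros [f [N H]] E. exists f; split; auto. intro x. rewrite <- E. auto. Qed.

Lemma PR_id : PR (fun x => x).
Proof. exists (PPair PFst PSnd). split. simpl; auto. intro x.
  rewrite <- (pair_p x) at 2. constructor; constructor. Qed.

Lemma PR_comp F G : PR F -> PR G -> PR (fun x => F (G x)).
Proof. intros [f [Nf Hf]] [g [Ng Hg]]. exists (PComp f g). split. simpl; auto.
  intro x. econstructor; eauto. Qed.

Lemma PR_pair F G : PR F -> PR G -> PR (fun x => pair (F x) (G x)).
Proof. intros [f [Nf Hf]] [g [Ng Hg]]. exists (PPair f g). split. simpl; auto.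
  intro x. econstructor; eauto. Qed.

Lemma PR_p1 F : PR F -> PR (fun x => p1 (F x)).
Proof. intro H. apply (PR_comp p1 F); auto. exists PFst; split; simpl; auto.
  intro; constructor. Qed.
Lemma PR_p2 F : PR F -> PR (fun x => p2 (F x)).
Proof. intro H. apply (PR_comp p2 F); auto. exists PSnd; split; simpl; auto.
  intro; constructor. Qed.
Lemma PR_S F : PR F -> PR (fun x => S (F x)).
Proof. intro H. apply (PR_comp S F); auto. exists PSucc; split; simpl; auto.
  intro; constructor. Qed.
Lemma PR_const c : PR (fun _ => c).
Proof. induction c.
  - exists PZero; split; simpl; auto. intro; constructor.
  - apply (PR_S (fun _ => c)); auto. Qed.

Fixpoint nrec (i : nat) (b : nat -> nat -> nat) (n : nat) : nat :=
  match n with 0 => i | S n => b n (nrec i b n) end.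

Lemma PR_nrec I B N : PR N -> PR I ->
  PR (fun p => B (p1 p) (p1 (p2 p)) (p2 (p2 p))) ->
  PR (fun x => nrec (I x) (B x) (N x)).
Proof.
  intros HN [g [Ng Hg]] [h [Nh Hh]].
  assert (HR : PR (fun q => nrec (I (p1 q)) (B (p1 q)) (p2 q))).
  { exists (PRec g h). split. simpl; auto. intro q. rewrite <- (pair_p q).
    rewrite p1_pair, p2_pair. generalize (p2 q) as n. intro n. induction n.
    - constructor. auto.
    - simpl. econstructor. apply IHn. specialize (Hh (pair (p1 q) (pair n (nrec (I (p1 q)) (B (p1 q)) n)))).
      rewrite !p1_pair, !p2_pair, !p1_pair in Hh. exact Hh. }
  apply PR_ext with (F := fun x => nrec (I (p1 (pair x (N x)))) (B (p1 (pair x (N x)))) (p2 (pair x (N x)))).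
  - apply (PR_comp (fun q => nrec (I (p1 q)) (B (p1 q)) (p2 q)) (fun x => pair x (N x))); auto. apply PR_pair; auto. apply PR_id.
  - intro; now rewrite p1_pair, p2_pair.
Qed.

Definition PR2 (op : nat -> nat -> nat) := PR (fun p => op (p1 p) (p2 p)).
Lemma PR_bin op F G : PR2 op -> PR F -> PR G -> PR (fun x => op (F x) (G x)).
Proof. intros H HF HG. eapply PR_ext. apply (PR_comp (fun p => op (p1 p) (p2 p)) (fun x => pair (F x) (G x))). exact H.
  apply PR_pair; auto. intro; simpl. now rewrite p1_pair, p2_pair. Qed.

Lemma PR2_add : PR2 Nat.add.
Proof. unfold PR2. eapply PR_ext.
  apply (PR_nrec (fun p => p1 p) (fun _ _ acc => S acc) (fun p => p2 p)).
  apply PR_p2, PR_id. apply PR_p1, PR_id. apply PR_S, PR_p2, PR_p2, PR_id.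
  intro x. simpl. induction (p2 x); simpl; lia. Qed.
Lemma PR2_mul : PR2 Nat.mul.
Proof. unfold PR2. eapply PR_ext.
  apply (PR_nrec (fun p => 0) (fun p _ acc => acc + p1 p) (fun p => p2 p)).
  apply PR_p2, PR_id. apply PR_const.
  apply PR_bin. apply PR2_add. apply PR_p2, PR_p2, PR_id. apply PR_p1, PR_p1, PR_id.
  intro x. simpl. induction (p2 x); simpl; lia. Qed.
Lemma PR_pred : PR Nat.pred.
Proof. eapply PR_ext.
  apply (PR_nrec (fun p => 0) (fun _ n _ => n) (fun p => p)).
  apply PR_id. apply PR_const. apply PR_p1, PR_p2, PR_id.
  intro x. destruct x; reflexivity. Qed.
Lemma PR2_sub : PR2 Nat.sub.
Proof. unfold PR2. eapply PR_ext.
  apply (PR_nrec (fun p => p1 p) (fun _ _ acc => Nat.pred acc) (fun p => p2 p)).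
  apply PR_p2, PR_id. apply PR_p1, PR_id. apply (PR_comp Nat.pred). apply PR_pred. apply PR_p2, PR_p2, PR_id.
  intro x. simpl. generalize (p1 x); induction (p2 x); intro; simpl. lia.
  rewrite IHn. lia. Qed.

Lemma PR_add F G : PR F -> PR G -> PR (fun x => F x + G x).
Proof. apply PR_bin, PR2_add. Qed.
Lemma PR_mul F G : PR F -> PR G -> PR (fun x => F x * G x).
Proof. apply PR_bin, PR2_mul. Qed.
Lemma PR_sub F G : PR F -> PR G -> PR (fun x => F x - G x).
Proof. apply PR_bin, PR2_sub. Qed.
Lemma PR_predF F : PR F -> PR (fun x => Nat.pred (F x)).
Proof. intro; apply (PR_comp Nat.pred); auto using PR_pred. Qed.

Lemma PRb_eqb F G : PR F -> PR G -> PRb (fun x => F x =? G x).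
Proof. intros. eapply PR_ext with (F := fun x => 1 - ((F x - G x) + (G x - F x))).
  apply PR_sub. apply PR_const. apply PR_add; apply PR_sub; auto.
  intro x. destruct (Nat.eqb_spec (F x) (G x)); simpl Nat.b2n; lia. Qed.
Lemma PRb_leb F G : PR F -> PR G -> PRb (fun x => F x <=? G x).
Proof. intros. eapply PR_ext with (F := fun x => 1 - (F x - G x)).
  apply PR_sub. apply PR_const. apply PR_sub; auto.
  intro x. destruct (Nat.leb_spec (F x) (G x)); simpl Nat.b2n; lia. Qed.
Lemma PRb_ltb F G : PR F -> PR G -> PRb (fun x => F x <? G x).
Proof. intros. eapply PR_ext with (F := fun x => 1 - (S (F x) - G x)).
  apply PR_sub. apply PR_const. apply PR_sub; auto. apply PR_S; auto.
  intro x. destruct (Nat.ltb_spec (F x) (G x)); simpl Nat.b2n; lia. Qed.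
Lemma PRb_andb F G : PRb F -> PRb G -> PRb (fun x => F x && G x).
Proof. intros. eapply PR_ext with (F := fun x => Nat.b2n (F x) * Nat.b2n (G x)).
  apply PR_mul; auto. intro x. destruct (F x), (G x); reflexivity. Qed.
Lemma PRb_orb F G : PRb F -> PRb G -> PRb (fun x => F x || G x).
Proof. intros. eapply PR_ext with (F := fun x => Nat.b2n (F x) + Nat.b2n (G x) - Nat.b2n (F x) * Nat.b2n (G x)).
  apply PR_sub. apply PR_add; auto. apply PR_mul; auto. intro x. destruct (F x), (G x); reflexivity. Qed.
Lemma PRb_negb F : PRb F -> PRb (fun x => negb (F x)).
Proof. intros. eapply PR_ext with (F := fun x => 1 - Nat.b2n (F x)).
  apply PR_sub; auto. apply PR_const. intro x. destruct (F x); reflexivity. Qed.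
Lemma PR_if C A B : PRb C -> PR A -> PR B -> PR (fun x => if C x then A x else B x).
Proof. intros. eapply PR_ext with (F := fun x => A x * Nat.b2n (C x) + B x * (1 - Nat.b2n (C x))).
  apply PR_add; apply PR_mul; auto. apply PR_sub; auto. apply PR_const.
  intro x. destruct (C x); simpl; lia. Qed.
Lemma PRb_if C A B : PRb C -> PRb A -> PRb B -> PRb (fun x => if C x then A x else B x).
Proof. intros. eapply PR_ext. apply (PR_if C (fun x => Nat.b2n (A x)) (fun x => Nat.b2n (B x))); auto.
  intro x. cbv beta. destruct (C x); reflexivity. Qed.

Definition PR3 (f : nat -> nat -> nat -> nat) := PR (fun p => f (p1 p) (p1 (p2 p)) (p2 (p2 p))).
Lemma PR_tern f F G H : PR3 f -> PR F -> PR G -> PR H -> PR (fun x => f (F x) (G x) (H x)).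
Proof. intros Hf HF HG HH. eapply PR_ext.
  apply (PR_comp (fun p => f (p1 p) (p1 (p2 p)) (p2 (p2 p))) (fun x => pair (F x) (pair (G x) (H x)))); auto.
  apply PR_pair; auto. apply PR_pair; auto.
  intro x; simpl. now repeat rewrite ?p1_pair, ?p2_pair. Qed.
Lemma PR_un f F : PR f -> PR F -> PR (fun x => f (F x)).
Proof. intros; apply (PR_comp f F); auto. Qed.

Create HintDb prdb.

Ltac prt_user := fail.

Ltac prt :=
  cbv beta zeta;
  first [ assumption | apply PR_const | prt_main ]
with prt_main :=
  lazymatch goal with
  | |- PRb _ => unfold PRb; prt
  | |- PR (fun x => x) => apply PR_id
  | |- PR (fun x => Nat.b2n (@?A x =? @?B x)) => apply (PRb_eqb A B); prt
  | |- PR (fun x => Nat.b2n (@?A x <=? @?B x)) => apply (PRb_leb A B); prt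
  | |- PR (fun x => Nat.b2n (@?A x <? @?B x)) => apply (PRb_ltb A B); prt
  | |- PR (fun x => Nat.b2n (@?A x && @?B x)) => apply (PRb_andb A B); prt
  | |- PR (fun x => Nat.b2n (@?A x || @?B x)) => apply (PRb_orb A B); prt
  | |- PR (fun x => Nat.b2n (negb (@?A x))) => apply (PRb_negb A); prt
  | |- PR (fun x => Nat.b2n (if @?C x then @?A x else @?B x)) => apply (PRb_if C A B); prt
  | |- PR (fun x => S (@?A x)) => apply (PR_S A); prt
  | |- PR (fun x => p1 (@?A x)) => apply (PR_p1 A); prt
  | |- PR (fun x => p2 (@?A x)) => apply (PR_p2 A); prt
  | |- PR (fun x => pair (@?A x) (@?B x)) => apply (PR_pair A B); prt
  | |- PR (fun x => @?A x + @?B x) => apply (PR_add A B); prt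
  | |- PR (fun x => @?A x * @?B x) => apply (PR_mul A B); prt
  | |- PR (fun x => @?A x - @?B x) => apply (PR_sub A B); prt
  | |- PR (fun x => Nat.pred (@?A x)) => apply (PR_predF A); prt
  | |- PR (fun x => if @?C x then @?A x else @?B x) => apply (PR_if C A B); prt
  | |- PR (fun x => nrec (@?I x) (@?B x) (@?N x)) => apply (PR_nrec I B N); prt
  | _ => first [ prt_user | prt_gen ]
  end
with prt_gen :=
  lazymatch goal with
  | |- PR (fun x => Nat.b2n (?f (@?A x) (@?B x) (@?C x))) =>
      apply (PR_tern (fun a b c => Nat.b2n (f a b c)) A B C); [solve [auto with prdb] | prt | prt | prt]
  | |- PR (fun x => Nat.b2n (?f (@?A x) (@?B x))) =>
      apply (PR_bin (fun a b => Nat.b2n (f a b)) A B); [solve [auto with prdb] | prt | prt]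
  | |- PR (fun x => Nat.b2n (?f (@?A x))) =>
      apply (PR_un (fun a => Nat.b2n (f a)) A); [solve [auto with prdb] | prt]
  | |- PR (fun x => ?f (@?A x) (@?B x) (@?C x)) =>
      apply (PR_tern f A B C); [solve [auto with prdb] | prt | prt | prt]
  | |- PR (fun x => ?f (@?A x) (@?B x)) =>
      apply (PR_bin f A B); [solve [auto with prdb] | prt | prt]
  | |- PR (fun x => ?f (@?A x)) =>
      apply (PR_un f A); [solve [auto with prdb] | prt]
  end.

Fixpoint ball n (P : nat -> bool) := match n with 0 => true | S n => ball n P && P n end.
Fixpoint bex n (P : nat -> bool) := match n with 0 => false | S n => bex n P || P n end.
Fixpoint bsearch n (P : nat -> bool) := match n with 0 => 0 | S n =>
  let r := bsearch n P in if r <? n then r else if P n then n else S n end.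

Lemma ball_spec n P : ball n P = true <-> forall i, i < n -> P i = true.
Proof. induction n; simpl. split; intros; auto; lia.
  rewrite andb_true_iff, IHn. split.
  - intros [H1 H2] i Hi. destruct (Nat.eq_dec i n). subst; auto. apply H1; lia.
  - intros H; split; auto. Qed.
Lemma bex_spec n P : bex n P = true <-> exists i, i < n /\ P i = true.
Proof. induction n; simpl. split. discriminate. intros [i [H _]]; lia.
  rewrite orb_true_iff, IHn. split.
  - intros [[i [H1 H2]]|H]. exists i; split; auto. exists n; auto.
  - intros [i [H1 H2]]. destruct (Nat.eq_dec i n). subst; auto. left; exists i; split; auto; lia. Qed.
Lemma bsearch_spec n P : bsearch n P <= n /\ (bsearch n P < n -> P (bsearch n P) = true)
  /\ forall i, i < bsearch n P -> P i = false.
Proof. induction n as [|n [IH1 [IH2 IH3]]]; simpl. split; [lia|split;[lia|intros;lia]].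
  destruct (Nat.ltb_spec (bsearch n P) n).
  - split; [lia|split]; auto.
  - assert (bsearch n P = n) by lia. destruct (P n) eqn:E.
    + split; [lia|split]; auto. intros i Hi. apply IH3; lia.
    + split; [lia|split]. lia. intros i Hi. destruct (Nat.eq_dec i n). subst; auto. apply IH3; lia. Qed.

Lemma PR_ball N P : PR N -> PRb (fun p => P (p1 p) (p2 p)) -> PRb (fun x => ball (N x) (P x)).
Proof. intros HN HP. eapply PR_ext with (F := fun x => nrec 1 (fun i acc => acc * Nat.b2n (P x i)) (N x)).
  - prt.
  - intro x. induction (N x); simpl; auto. rewrite IHn. destruct (ball n (P x)), (P x n); auto. Qed.
Lemma PR_bex N P : PR N -> PRb (fun p => P (p1 p) (p2 p)) -> PRb (fun x => bex (N x) (P x)).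
Proof. intros HN HP. eapply PR_ext with (F := fun x => nrec 0 (fun i acc => if acc =? 0 then Nat.b2n (P x i) else 1) (N x)).
  - prt.
  - intro x. induction (N x); simpl; auto. rewrite IHn. destruct (bex n (P x)), (P x n); auto. Qed.
Lemma PR_bsearch N P : PR N -> PRb (fun p => P (p1 p) (p2 p)) -> PR (fun x => bsearch (N x) (P x)).
Proof. intros HN HP. eapply PR_ext with (F := fun x => nrec 0 (fun j r => if r <? j then r else if P x j then j else S j) (N x)).
  - prt.
  - intro x. induction (N x); simpl; auto. rewrite IHn. reflexivity. Qed.

Ltac prt_user ::=
  lazymatch goal with
  | |- PR (fun x => Nat.b2n (ball (@?N x) (@?P x))) => apply (PR_ball N P); prt
  | |- PR (fun x => Nat.b2n (bex (@?N x) (@?P x))) => apply (PR_bex N P); prt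
  | |- PR (fun x => bsearch (@?N x) (@?P x)) => apply (PR_bsearch N P); prt
  end.

Definition test (k : nat) := bex k (fun q => ball (p1 q) (fun i => (i + q =? k * 3) && (nrec 0 (fun a b => a + b + q) i <=? 5))).
Lemma PR_test : PRb test.
Proof. unfold test. prt. Qed.

Definition nth_code j c := p1 (nrec c (fun _ acc => p2 acc) j).
Definition Eb e a b := negb (a =? b) && (negb (nth_code (pair a b) e =? 0) || negb (nth_code (pair b a) e =? 0)).
Definition pm q i := nth_code i q.
Definition beq' x y := (x && y) || (negb x && negb y).
Definition PB k := S (nrec 0 (fun _ acc => pair k acc) k).
Definition EB k := S (nrec 0 (fun _ acc => pair 1 acc) (pair k k)).
Definition isoB k e1 e2 := bex (PB k) (fun q =>
   ball k (fun i => pm q i <? k) &&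
   ball k (fun i => ball k (fun j => negb (pm q i =? pm q j) || (i =? j))) &&
   ball k (fun c => bex k (fun i => pm q i =? c)) &&
   ball k (fun a => ball k (fun b => beq' (Eb e2 (pm q a) (pm q b)) (Eb e1 a b)))).
Definition canon k e := ball e (fun e' => negb (isoB k e' e)).
Definition bmin lo hi P := lo + bsearch (hi - lo) (fun i => P (lo + i)).
Definition next s :=
   let e' := bmin (S (p2 s)) (EB (p1 s)) (canon (p1 s)) in
   if e' <? EB (p1 s) then pair (p1 s) e' else pair (S (p1 s)) 0.
Definition Gsc n := nrec (pair 1 0) (fun _ s => next s) n.

Lemma PR_nth_code : PR2 nth_code.
Proof. unfold PR2, nth_code. prt. Qed.
Hint Resolve PR_nth_code : prdb.
Lemma PR_Eb : PR3 (fun a b c => Nat.b2n (Eb a b c)).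
Proof. unfold PR3, Eb. prt. Qed.
Hint Resolve PR_Eb : prdb.
Lemma PR_EB : PR EB.
Proof. change (PR (fun k => EB k)). unfold EB. prt. Qed.
Hint Resolve PR_EB : prdb.
Lemma PR_isoB : PR3 (fun a b c => Nat.b2n (isoB a b c)).
Proof. unfold PR3, isoB, PB, pm, beq'. prt. Qed.
Hint Resolve PR_isoB : prdb.
Lemma PR_canon : PR2 (fun a b => Nat.b2n (canon a b)).
Proof. unfold PR2, canon. prt. Qed.
Hint Resolve PR_canon : prdb.
Lemma PR_next : PR next.
Proof. change (PR (fun s => next s)). unfold next, bmin. prt. Qed.
Hint Resolve PR_next : prdb.
Lemma PR_Gsc : PR Gsc.
Proof. change (PR (fun s => Gsc s)). unfold Gsc. prt. Qed.

Definition Wb x :=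
  (p1 (p2 x) <=? 1) && (p1 (p2 (p2 x)) <=? 1) &&
  (p1 (p2 (p2 (p2 x))) <? p1 (Gsc (p1 x))) && (p2 (p2 (p2 (p2 x))) <? p1 (Gsc (p1 x))) &&
  beq' (if p1 (p2 (p2 x)) =? 0 then (p1 (p2 (p2 (p2 x))) =? p2 (p2 (p2 (p2 x))))
        else Eb (p2 (Gsc (p1 x))) (p1 (p2 (p2 (p2 x)))) (p2 (p2 (p2 (p2 x)))))
       (p1 (p2 x) =? 0).

Lemma PR_Gsc' : PR (fun x => Gsc x).
Proof. exact PR_Gsc. Qed.
Hint Resolve PR_Gsc' : prdb.

Lemma PR_Wc : PR (fun x => if Wb x then 0 else 1).
Proof. unfold Wb, beq'. prt. Qed.

Definition W x := Wb x = true.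

Lemma ce_W : ce W.
Proof.
  destruct PR_Wc as [g [Ng Hg]].
  exists (PMu (PComp g PFst)). intro x. unfold W. split.
  - intro H. exists 0. constructor. 2: intros; lia.
    econstructor. apply eFst. change (fst (unpair (pair x 0))) with (p1 (pair x 0)).
    rewrite p1_pair. specialize (Hg x). rewrite H in Hg. exact Hg.
  - intros [y Hy]. inversion Hy; subst.
    match goal with H : evalR (PComp g PFst) _ 0 |- _ => inversion H; subst end.
    match goal with H : evalR PFst _ _ |- _ => inversion H; subst end.
    change (fst (unpair (pair x y))) with (p1 (pair x y)) in *. rewrite p1_pair in *.
    match goal with H : evalR g x 0 |- _ => pose proof (evalR_det _ _ _ H Ng _ (Hg x)) as E end.
    destruct (Wb x); auto; discriminate.
Qed.

Definition T s := nat_rec (fun _ => nat) 0 (fun i m => S i + m) s.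
Lemma pair_T a b : pair a b = b + T (b + a).
Proof. reflexivity. Qed.
Lemma T_S s : T (S s) = S s + T s.
Proof. reflexivity. Qed.
Lemma T_mono s s' : s <= s' -> T s <= T s'.
Proof. induction 1; auto. rewrite T_S. lia. Qed.
Lemma T_smono s s' : s < s' -> s' + T s <= T s'.
Proof. induction 1. rewrite T_S; lia. rewrite T_S. lia. Qed.
Lemma pair_le a b a' b' : a <= a' -> b <= b' -> pair a b <= pair a' b'.
Proof. intros. rewrite !pair_T. pose proof (T_mono (b+a) (b'+a')). lia. Qed.
Lemma pair_lt_l a b a' : a < a' -> pair a b < pair a' b.
Proof. intros. rewrite !pair_T. pose proof (T_smono (b+a) (b+a')). lia. Qed.
Lemma pair_lt_r a b b' : b < b' -> pair a b < pair a b'.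
Proof. intros. rewrite !pair_T. pose proof (T_smono (b+a) (b'+a)). lia. Qed.
Lemma pair_lt_kk a b k : a < k -> b < k -> pair a b < pair k k.
Proof. intros. eapply Nat.lt_le_trans. apply pair_lt_l; eauto. apply pair_le; lia. Qed.

Fixpoint encfrom (f : nat -> nat) i m := match m with 0 => 0 | S m => pair (f i) (encfrom f (S i) m) end.

Lemma nrec_p2_S c j : nrec c (fun _ acc => p2 acc) (S j) = nrec (p2 c) (fun _ acc => p2 acc) j.
Proof. induction j. reflexivity. simpl in *. now rewrite IHj. Qed.
Lemma nth_code_S j c : nth_code (S j) c = nth_code j (p2 c).
Proof. unfold nth_code. now rewrite nrec_p2_S. Qed.
Lemma nth_encfrom f j : forall i m, j < m -> nth_code j (encfrom f i m) = f (i + j).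
Proof. induction j; intros i m H; destruct m; try lia; simpl.
  - unfold nth_code; simpl. rewrite p1_pair. f_equal; lia.
  - rewrite nth_code_S. simpl. rewrite p2_pair, IHj by lia. f_equal; lia. Qed.
Lemma encfrom_bound f M m : forall i, (forall j, j < m -> f (i + j) <= M) ->
  encfrom f i m <= nrec 0 (fun _ acc => pair M acc) m.
Proof. induction m; intros i H; simpl. lia. apply pair_le.
  specialize (H 0). rewrite Nat.add_0_r in H. apply H; lia.
  apply IHm. intros j Hj. specialize (H (S j)). replace (S i + j) with (i + S j) by lia. apply H. lia. Qed.

Definition mkG k e := mkGraph (seq 0 k) (Eb e).
Lemma in_mkG k e a : in_graph (mkG k e) a <-> a < k.
Proof. unfold in_graph, mkG; simpl. rewrite in_seq. lia. Qed.
Definition card (G : graph) := length (nodup Nat.eq_dec (verts G)).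
Lemma card_mkG k e : card (mkG k e) = k.
Proof. unfold card, mkG; simpl. rewrite nodup_fixed_point. apply length_seq. apply seq_NoDup. Qed.

Lemma Eb_sym e a b : Eb e a b = Eb e b a.
Proof. unfold Eb. rewrite Nat.eqb_sym, orb_comm. reflexivity. Qed.
Lemma Eb_irr e a : Eb e a a = false.
Proof. unfold Eb. now rewrite Nat.eqb_refl. Qed.
Lemma fug_mkG k e : 1 <= k -> is_fug (mkG k e).
Proof. intro H. split; [|split].
  - unfold mkG; simpl. destruct k. lia. simpl. discriminate.
  - intros; apply Eb_irr.
  - intros; apply Eb_sym. Qed.

Lemma iso_refl G : graph_iso G G.
Proof. exists (fun a => a). repeat split; eauto. Qed.
Lemma iso_trans G H K : graph_iso G H -> graph_iso H K -> graph_iso G K.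
Proof. intros [f [F1 [F2 [F3 F4]]]] [g [G1 [G2 [G3 G4]]]].
  exists (fun a => g (f a)). split; [|split; [|split]].
  - auto.
  - intros a b Ha Hb E. apply F2; auto.
  - intros c Hc. destruct (G3 c Hc) as [b [Hb <-]]. destruct (F3 b Hb) as [a [Ha <-]]. eauto.
  - intros a b Ha Hb. rewrite G4; auto. Qed.
Lemma iso_sym G H : graph_iso G H -> graph_iso H G.
Proof. intros [f [F1 [F2 [F3 F4]]]].
  set (g := fun c => match find (fun a => f a =? c) (verts G) with Some a => a | None => 0 end).
  assert (Hg : forall c, in_graph H c -> in_graph G (g c) /\ f (g c) = c).
  { intros c Hc. unfold g. destruct (find (fun a => f a =? c) (verts G)) eqn:E.
    - apply find_some in E as [E1 E2]. apply Nat.eqb_eq in E2. auto.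
    - destruct (F3 c Hc) as [a [Ha Hfa]]. eapply find_none in E; [|exact Ha].
      rewrite Hfa, Nat.eqb_refl in E. discriminate. }
  exists g. split; [|split; [|split]].
  - intros c Hc. apply Hg; auto.
  - intros c d Hc Hd E. rewrite <- (proj2 (Hg c Hc)), <- (proj2 (Hg d Hd)). now f_equal.
  - intros a Ha. exists (f a). split; auto. destruct (Hg (f a) (F1 a Ha)) as [H1 H2]. apply F2; auto.
  - intros c d Hc Hd. destruct (Hg c Hc), (Hg d Hd). rewrite <- F4 by auto. congruence. Qed.

Lemma iso_card_le G H : graph_iso G H -> card G <= card H.
Proof. intros [f [F1 [F2 [F3 F4]]]]. unfold card.
  rewrite <- (length_map f). apply NoDup_incl_length.
  - assert (forall l, NoDup l -> incl l (verts G) -> NoDup (map f l)).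
    { induction l; intros ND I; simpl. constructor. inversion ND; subst. constructor.
      + intro Hin. apply in_map_iff in Hin as [b [Hb1 Hb2]].
        assert (b = a) by (apply F2; auto; [apply I; simpl; auto| apply I; simpl; auto]). subst. tauto.
      + apply IHl; auto. intros x Hx; apply I; simpl; auto. }
    apply H0. apply NoDup_nodup. intros x Hx. now apply nodup_In in Hx.
  - intros c Hc. apply in_map_iff in Hc as [a [<- Ha]]. apply nodup_In. apply F1. now apply nodup_In in Ha. Qed.
Lemma iso_card G H : graph_iso G H -> card G = card H.
Proof. intro I. pose proof (iso_card_le _ _ I). pose proof (iso_card_le _ _ (iso_sym _ _ I)). lia. Qed.

Lemma proper_card G G' : proper_ext G G' -> card G < card G'.
Proof. intros [[S1 S2] [a [Ha Hna]]]. unfold card.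
  apply (NoDup_incl_length (l := a :: nodup Nat.eq_dec (verts G))).
  - constructor. rewrite nodup_In. exact Hna. apply NoDup_nodup.
  - intros x [<-|Hx]; apply nodup_In; auto. apply S1. now apply nodup_In in Hx. Qed.

Lemma beq'_spec x y : beq' x y = true <-> x = y.
Proof. unfold beq'; destruct x, y; simpl; split; intro; congruence. Qed.

Lemma isoB_iso k e1 e2 : isoB k e1 e2 = true <-> graph_iso (mkG k e1) (mkG k e2).
Proof. split.
  - unfold isoB. rewrite bex_spec. intros [q [_ Hq]].
    rewrite !andb_true_iff, !ball_spec in Hq. destruct Hq as [[[H1 H2] H3] H4].
    exists (pm q). split; [|split; [|split]].
    + intros a Ha. apply in_mkG in Ha. apply in_mkG. apply Nat.ltb_lt. auto.
    + intros a b Ha Hb E. apply in_mkG in Ha, Hb. specialize (H2 a Ha). rewrite ball_spec in H2.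
      specialize (H2 b Hb). apply orb_true_iff in H2 as [H2|H2].
      rewrite E, Nat.eqb_refl in H2. discriminate. now apply Nat.eqb_eq.
    + intros c Hc. apply in_mkG in Hc. specialize (H3 c Hc). apply bex_spec in H3 as [i [Hi Ei]].
      exists i. split. now apply in_mkG. now apply Nat.eqb_eq.
    + intros a b Ha Hb. apply in_mkG in Ha, Hb. specialize (H4 a Ha). rewrite ball_spec in H4.
      apply beq'_spec. simpl. auto.
  - intros [f [F1 [F2 [F3 F4]]]].
    set (q := encfrom f 0 k).
    assert (Hpm : forall i, i < k -> pm q i = f i).
    { intros i Hi. unfold pm, q. rewrite nth_encfrom; auto. }
    assert (Fk : forall i, i < k -> f i < k).
    { intros i Hi. apply (proj1 (in_mkG k e2 (f i))). apply F1. now apply in_mkG. }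
    unfold isoB. apply bex_spec. exists q. split.
    + unfold PB, q. apply Nat.lt_succ_r. apply encfrom_bound. intros j Hj. simpl. specialize (Fk j). lia.
    + rewrite !andb_true_iff, !ball_spec. split; [split; [split|]|].
      * intros i Hi. rewrite Hpm by auto. apply Nat.ltb_lt; auto.
      * intros i Hi. apply ball_spec. intros j Hj. rewrite !Hpm by auto.
        destruct (Nat.eqb_spec (f i) (f j)); simpl; auto.
        apply Nat.eqb_eq. apply F2; auto; apply in_mkG; auto.
      * intros c Hc. apply bex_spec. destruct (F3 c) as [i [Hi Ei]]. now apply in_mkG.
        apply in_mkG in Hi. exists i. split; auto. rewrite Hpm by auto. now apply Nat.eqb_eq.
      * intros a Ha. apply ball_spec. intros b Hb. rewrite !Hpm by auto. apply beq'_spec.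
        apply (F4 a b); apply in_mkG; auto.
Qed.

Fixpoint idx (a : nat) (l : list nat) : nat :=
  match l with [] => 0 | x :: l => if x =? a then 0 else S (idx a l) end.
Lemma idx_spec a l : In a l -> idx a l < length l /\ nth (idx a l) l 0 = a.
Proof. induction l; simpl. tauto. intros [<-|H]. rewrite Nat.eqb_refl. split; auto; lia.
  destruct (Nat.eqb_spec a0 a). subst. split; auto; lia. destruct (IHl H). split; auto; lia. Qed.
Lemma idx_nth l i : NoDup l -> i < length l -> idx (nth i l 0) l = i.
Proof. revert i. induction l; simpl; intros i ND Hi. lia. inversion ND; subst.
  destruct i. now rewrite Nat.eqb_refl.
  destruct (Nat.eqb_spec a (nth i l 0)). subst. exfalso. apply H1. apply nth_In. lia.
  rewrite IHl; auto. lia. Qed.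

Lemma fug_code G : is_fug G -> 1 <= card G /\ exists e, e < EB (card G) /\ graph_iso G (mkG (card G) e).
Proof. intros [Hne [Hirr Hsym]].
  set (L := nodup Nat.eq_dec (verts G)).
  set (k := card G). assert (Hk : k = length L) by reflexivity.
  assert (HL : forall a, In a L <-> in_graph G a). { intro a. unfold L. rewrite nodup_In. reflexivity. }
  assert (ND : NoDup L) by apply NoDup_nodup.
  set (v := fun i => nth i L 0).
  assert (Hv : forall i, i < k -> in_graph G (v i)). { intros. apply HL. apply nth_In. lia. }
  split.
  { destruct (verts G) as [|a l] eqn:E. congruence. assert (In a L) by (apply HL; unfold in_graph; rewrite E; simpl; auto).
    rewrite Hk. destruct L; simpl in *. tauto. lia. }
  set (e := encfrom (fun j => if edge G (v (p1 j)) (v (p2 j)) then 1 else 0) 0 (pair k k)).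
  exists e. split.
  - unfold EB, e. apply Nat.lt_succ_r. apply encfrom_bound. intros j _. destruct (edge G _ _); lia.
  - assert (HE : forall a b, a < k -> b < k -> Eb e a b = edge G (v a) (v b)).
    { intros a b Ha Hb. unfold Eb, e. rewrite !nth_encfrom by (apply pair_lt_kk; auto).
      simpl. rewrite !p1_pair, !p2_pair.
      destruct (Nat.eqb_spec a b).
      - subst. simpl. rewrite Hirr; auto.
      - simpl. rewrite (Hsym (v b) (v a)) by auto. destruct (edge G (v a) (v b)); reflexivity. }
    exists (fun a => idx a L). split; [|split; [|split]].
    + intros a Ha. apply in_mkG. rewrite Hk. apply idx_spec. now apply HL.
    + intros a b Ha Hb E. apply HL in Ha, Hb. destruct (idx_spec a L Ha), (idx_spec b L Hb). congruence.
    + intros c Hc. apply in_mkG in Hc. exists (v c). split; auto. unfold v. apply idx_nth; auto.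
    + intros a b Ha Hb. apply HL in Ha, Hb. destruct (idx_spec a L Ha) as [A1 A2], (idx_spec b L Hb) as [B1 B2].
      simpl. rewrite HE by lia. unfold v. congruence.
Qed.

Lemma bmin_spec lo hi P : lo <= hi ->
  lo <= bmin lo hi P <= hi /\ (bmin lo hi P < hi -> P (bmin lo hi P) = true) /\
  forall i, lo <= i < bmin lo hi P -> P i = false.
Proof. intro H. unfold bmin. destruct (bsearch_spec (hi - lo) (fun i => P (lo + i))) as [A [B C]].
  split; [lia|split].
  - intro. apply B. lia.
  - intros i Hi. replace i with (lo + (i - lo)) by lia. apply C. lia. Qed.

Definition Inv s := 1 <= p1 s /\ p2 s < EB (p1 s) /\ canon (p1 s) (p2 s) = true.

Lemma EB_pos k : 0 < EB k.
Proof. unfold EB; lia. Qed.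
Lemma canon0 k : canon k 0 = true.
Proof. reflexivity. Qed.

Lemma next_cases s : p2 s < EB (p1 s) ->
  (exists r, next s = pair (p1 s) r /\ p2 s < r < EB (p1 s) /\ canon (p1 s) r = true /\
     forall i, p2 s < i < r -> canon (p1 s) i = false) \/
  (next s = pair (S (p1 s)) 0 /\ forall i, p2 s < i < EB (p1 s) -> canon (p1 s) i = false).
Proof. intro H. destruct (bmin_spec (S (p2 s)) (EB (p1 s)) (canon (p1 s))) as [A [B C]]. lia.
  unfold next. destruct (Nat.ltb_spec (bmin (S (p2 s)) (EB (p1 s)) (canon (p1 s))) (EB (p1 s))).
  - left. eexists. split. reflexivity. split. lia. split. auto. intros. apply C. lia.
  - right. split. reflexivity. intros. apply C. lia. Qed.

Lemma Inv_next s : Inv s -> Inv (next s).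
Proof. intros [H1 [H2 H3]]. destruct (next_cases s H2) as [[r [E [R1 [R2 R3]]]]|[E R]]; rewrite E;
  unfold Inv; rewrite p1_pair, p2_pair. repeat split; auto; lia.
  repeat split; auto. apply EB_pos. Qed.

Lemma Gsc_S n : Gsc (S n) = next (Gsc n).
Proof. reflexivity. Qed.
Lemma Inv_Gsc n : Inv (Gsc n).
Proof. induction n. unfold Inv, Gsc; simpl. rewrite p1_pair, p2_pair. split. lia. split. apply EB_pos. reflexivity.
  rewrite Gsc_S. now apply Inv_next. Qed.

Definition lexlt s t := p1 s < p1 t \/ (p1 s = p1 t /\ p2 s < p2 t).
Lemma lexlt_next n : lexlt (Gsc n) (Gsc (S n)).
Proof. rewrite Gsc_S. destruct (Inv_Gsc n) as [_ [H _]].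
  destruct (next_cases _ H) as [[r [E [R1 _]]]|[E _]]; rewrite E; unfold lexlt; rewrite p1_pair, p2_pair; lia. Qed.
Lemma lexlt_mono m n : m < n -> lexlt (Gsc m) (Gsc n).
Proof. induction 1. apply lexlt_next. pose proof (lexlt_next m0). unfold lexlt in *. lia. Qed.
Lemma Gk_mono m n : m <= n -> p1 (Gsc m) <= p1 (Gsc n).
Proof. intro H. destruct (Nat.eq_dec m n). subst; auto. pose proof (lexlt_mono m n). unfold lexlt in *. lia. Qed.
Lemma Gsc_inj m n : Gsc m = Gsc n -> m = n.
Proof. intro E. destruct (Nat.lt_trichotomy m n) as [H|[H|H]]; auto;
  pose proof (lexlt_mono _ _ H) as L; unfold lexlt in L; rewrite E in L; lia. Qed.

Lemma up d : forall n, EB (p1 (Gsc n)) - p2 (Gsc n) <= d -> exists m, p1 (Gsc n) < p1 (Gsc m).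
Proof. induction d; intros n H; destruct (Inv_Gsc n) as [_ [H2 _]]. lia.
  destruct (next_cases _ H2) as [[r [E [R1 _]]]|[E _]].
  - destruct (IHd (S n)) as [m Hm]. rewrite Gsc_S, E, p1_pair, p2_pair. lia.
    exists m. rewrite Gsc_S, E, p1_pair in Hm. auto.
  - exists (S n). rewrite Gsc_S, E, p1_pair. lia. Qed.
Lemma unbounded k : exists n, k <= p1 (Gsc n).
Proof. induction k. exists 0; lia. destruct IHk as [n Hn].
  destruct (up _ n (le_n _)) as [m Hm]. exists m. lia. Qed.

Lemma hit k e : 1 <= k -> e < EB k -> canon k e = true -> exists n, Gsc n = pair k e.
Proof. intros Hk He Hc.
  assert (Main : forall n, k < p1 (Gsc n) \/ (k = p1 (Gsc n) /\ e <= p2 (Gsc n)) -> exists m, Gsc m = pair k e).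
  { induction n; intro H.
    - unfold Gsc in H; simpl in H. rewrite p1_pair, p2_pair in H. exists 0. unfold Gsc; simpl.
      f_equal; lia.
    - destruct (Nat.lt_ge_cases k (p1 (Gsc n))) as [L|L]. apply IHn; auto.
      destruct (Nat.eq_dec k (p1 (Gsc n))) as [Ek|Ek].
      + destruct (Nat.le_gt_cases e (p2 (Gsc n))) as [L2|L2]. apply IHn; auto.
        destruct (Inv_Gsc n) as [_ [H2 _]].
        rewrite Gsc_S in H. destruct (next_cases _ H2) as [[r [E [R1 [R2 R3]]]]|[E R]]; rewrite E, p1_pair, p2_pair in H.
        * destruct (Nat.eq_dec e r). exists (S n). rewrite Gsc_S, E. subst. auto.
          exfalso. rewrite Ek in Hc. rewrite R3 in Hc. discriminate. lia.
        * exfalso. rewrite Ek in Hc, He. rewrite R in Hc. discriminate. lia.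
      + destruct (Inv_Gsc n) as [_ [H2 _]].
        rewrite Gsc_S in H. destruct (next_cases _ H2) as [[r [E [R1 [R2 R3]]]]|[E R]]; rewrite E, p1_pair, p2_pair in H.
        * lia.
        * exists (S n). rewrite Gsc_S, E. f_equal; lia. }
  destruct (unbounded (S k)) as [n Hn]. apply (Main n). lia. Qed.

Definition Gs n := mkG (p1 (Gsc n)) (p2 (Gsc n)).

Lemma W_shape x : W x -> exists n l, x = pair n (code_lit l).
Proof. unfold W, Wb. intro H. rewrite !andb_true_iff in H. destruct H as [[[[H1 H2] _] _] _].
  apply Nat.leb_le in H1, H2.
  assert (Ex : x = pair (p1 x) (pair (p1 (p2 x)) (pair (p1 (p2 (p2 x))) (pair (p1 (p2 (p2 (p2 x)))) (p2 (p2 (p2 (p2 x)))))))) by (now rewrite !pair_p).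
  revert Ex H1 H2. generalize (p1 (p2 x)) (p1 (p2 (p2 x))) (p1 (p2 (p2 (p2 x)))) (p2 (p2 (p2 (p2 x)))).
  intros s s' a b Ex H1 H2. exists (p1 x).
  destruct s as [|[|s]]; [| |lia]; destruct s' as [|[|s']]; try lia.
  - exists (LPos (AEq a b)). exact Ex.
  - exists (LPos (AE a b)). exact Ex.
  - exists (LNeg (AEq a b)). exact Ex.
  - exists (LNeg (AE a b)). exact Ex.
Qed.

Lemma W_diag n l : W (pair n (code_lit l)) <-> in_diagram (Gs n) l.
Proof. unfold W, Wb. destruct l as [t|t]; destruct t as [a b|a b]; unfold code_lit, code_atom;
  repeat rewrite ?p1_pair, ?p2_pair; unfold in_diagram, holds_atom, Gs; rewrite !in_mkG; simpl;
  destruct (Nat.ltb_spec a (p1 (Gsc n))), (Nat.ltb_spec b (p1 (Gsc n))); simpl;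
  try (split; [discriminate| intros; lia]).
  - destruct (Nat.eqb_spec a b); simpl; split; intros; try tauto; try discriminate; try (split; [tauto|discriminate]).
  - destruct (Eb (p2 (Gsc n)) a b); simpl; split; intros; try tauto; try discriminate; try (split; [tauto|discriminate]).
  - destruct (Nat.eqb_spec a b); simpl; split; intros; try tauto; try discriminate; try (split; [tauto|discriminate]).
  - destruct (Eb (p2 (Gsc n)) a b); simpl; split; intros; try tauto; try discriminate; try (split; [tauto|discriminate]).
Qed.

Lemma card_Gs n : card (Gs n) = p1 (Gsc n).
Proof. apply card_mkG. Qed.

Lemma Gs_fried : friedberg Gs.
Proof. intros m n I.
  pose proof (iso_card _ _ I) as C. rewrite !card_Gs in C.
  unfold Gs in I. rewrite C in I.
  destruct (Inv_Gsc m) as [_ [_ Cm]], (Inv_Gsc n) as [_ [_ Cn]]. rewrite C in Cm.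
  assert (E2 : p2 (Gsc m) = p2 (Gsc n)).
  { destruct (Nat.lt_trichotomy (p2 (Gsc m)) (p2 (Gsc n))) as [L|[L|L]]; auto; exfalso.
    - unfold canon in Cn. rewrite ball_spec in Cn. specialize (Cn _ L).
      apply isoB_iso in I. rewrite I in Cn. discriminate.
    - unfold canon in Cm. rewrite ball_spec in Cm. specialize (Cm _ L).
      apply iso_sym, isoB_iso in I. rewrite I in Cm. discriminate. }
  apply Gsc_inj. rewrite <- (pair_p (Gsc m)), <- (pair_p (Gsc n)). congruence.
Qed.

Lemma Gs_surj G : is_fug G -> exists n, graph_iso G (Gs n).
Proof. intro HG. destruct (fug_code G HG) as [Hk [e [He I]]].
  set (k := card G) in *.
  set (P := fun e' => isoB k e' e).
  destruct (bsearch_spec (S e) P) as [A [B C]].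
  assert (Pe : P e = true) by (apply isoB_iso, iso_refl).
  set (e0 := bsearch (S e) P) in *.
  assert (L : e0 <= e). { destruct (Nat.le_gt_cases e0 e); auto. specialize (C e). rewrite Pe in C. discriminate C. lia. }
  assert (P0 : P e0 = true) by (apply B; lia).
  assert (Can : canon k e0 = true).
  { unfold canon. apply ball_spec. intros i Hi. destruct (isoB k i e0) eqn:E; auto.
    exfalso. assert (P i = true). { apply isoB_iso. apply isoB_iso in E, P0. eapply iso_trans; eauto. }
    rewrite C in H by auto. discriminate. }
  destruct (hit k e0 Hk ltac:(lia) Can) as [n Hn].
  exists n. unfold Gs. rewrite Hn, p1_pair, p2_pair. eapply iso_trans. exact I.
  apply iso_sym, isoB_iso. exact P0.
Qed.

Theorem lemma2p4 :
  exists (W : nat -> Prop) (Gs : nat -> graph),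
    comp_enum_FUG W Gs /\ friedberg Gs /\
    (forall (G G' : graph) (m n : nat),
        is_fug G -> is_fug G' ->
        graph_iso G (Gs m) -> graph_iso G' (Gs n) ->
        proper_ext G G' -> m < n).
Proof.
  exists W, Gs. split; [|split].
  - split; [apply ce_W|split; [apply W_shape|split]].
    + intro n. split. unfold Gs. apply fug_mkG. apply Inv_Gsc. apply W_diag.
    + apply Gs_surj.
  - apply Gs_fried.
  - intros G G' m n _ _ Im In Hp.
    pose proof (proper_card _ _ Hp) as C.
    rewrite (iso_card _ _ Im), (iso_card _ _ In), !card_Gs in C.
    destruct (Nat.lt_ge_cases m n); auto. pose proof (Gk_mono n m H). lia.
Qed.
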